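(* The game $G_{FL}=(\omega^{<\omega},c_{00}(\omega))$ has the following three properties, and any game $G=(T,A)$ with these three properties is isomorphic in $\mathbf{Games}_A$ to $G_{FL}$: (1) $T$ and $A$ are countable; (2) every finite game admits a game embedding into $G$; (3) $G$ is ultrahomogeneous with respect to $(\mathrm{emb},\mathbf{FinGame})$, i.e. for every finite game $C$ and all game embeddings $f,g\colon C\to G$ there is an automorphism $u$ of $G$ in $\mathbf{Games}_A$ with $u\circ f=g$.
   Context: A game tree is $T\subseteq M^{<\omega}$ (some set $M$) closed under initial segments such that every $t\in T$ has an extension $t^\frown x\in T$; $|t|$ is the length, $t\restriction k$ the initial segment of length $k$. $\mathrm{Run}(T)=\{R\in M^\omega:R\restriction n\in T\ \forall n\}$. A game is $(T,A)$ with $A\subseteq\mathrm{Run}(T)$; finite if $\mathrm{Run}(T)$ is finite. A chronological map $f\colon T_1\to T_2$ satisfies $|f(t)|=|t|$, $f(t\restriction k)=f(t)\restriction k$, inducing $\bar f$ on runs via $\bar f(R)\restriction n=f(R\restriction n)$. $\mathbf{Games}_A$ is the category of games with A-morphisms (chronological $f$ with $\bar f[A_1]\subseteq A_2$); its isomorphisms (automorphisms) are bijective chronological maps $f$ with $\bar f[A_1]=A_2$. A game embedding is an injective chronological $f$ with $\bar f(R)\in A_2\iff R\in A_1$ for all runs $R$. $c_{00}(\omega)$ is the set of eventually zero sequences in $\omega^\omega=\mathrm{Run}(\omega^{<\omega})$. *)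

(* Defs.v *)
From mathcomp Require Import all_boot.
Set Implicit Arguments. Unset Strict Implicit. Unset Printing Implicit Defensive.

(* Finite sequences over M are lists; subsets of M^{<omega} and of M^omega are predicates. *)

Definition prefix (M : Type) (R : nat -> M) (n : nat) : seq M := map R (iota 0 n).

Definition is_game_tree (M : Type) (T : seq M -> Prop) : Prop :=
  (forall t k, T t -> T (take k t)) /\ (forall t, T t -> exists x, T (rcons t x)).

Definition Run (M : Type) (T : seq M -> Prop) (R : nat -> M) : Prop :=
  forall n, T (prefix R n).

Definition is_game (M : Type) (T : seq M -> Prop) (A : (nat -> M) -> Prop) : Prop :=
  is_game_tree T /\ (forall R, A R -> Run T R).

Definition finite_game (M : Type) (T : seq M -> Prop) : Prop :=
  exists (n : nat) (e : nat -> (nat -> M)),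
    forall R, Run T R -> exists i, i < n /\ R = e i.

Definition countable_set (U : Type) (P : U -> Prop) : Prop :=
  exists g : U -> nat, forall x y, P x -> P y -> g x = g y -> x = y.

(* Chronological map T1 -> T2 (values outside T1 irrelevant). *)
Definition chronological (M1 M2 : Type) (T1 : seq M1 -> Prop) (T2 : seq M2 -> Prop)
  (f : seq M1 -> seq M2) : Prop :=
  forall t, T1 t ->
    T2 (f t) /\ size (f t) = size t /\ (forall k, f (take k t) = take k (f t)).

Definition runs_to (M1 M2 : Type) (f : seq M1 -> seq M2) (R : nat -> M1) (S : nat -> M2) :
  Prop := forall n, f (prefix R n) = prefix S n.

Definition injective_on (M1 M2 : Type) (T1 : seq M1 -> Prop) (f : seq M1 -> seq M2) : Prop :=
  forall s t, T1 s -> T1 t -> f s = f t -> s = t.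

Definition game_embedding (M1 M2 : Type)
  (T1 : seq M1 -> Prop) (A1 : (nat -> M1) -> Prop)
  (T2 : seq M2 -> Prop) (A2 : (nat -> M2) -> Prop) (f : seq M1 -> seq M2) : Prop :=
  chronological T1 T2 f /\ injective_on T1 f /\
  (forall R, Run T1 R -> forall S, runs_to f R S -> (A2 S <-> A1 R)).

Definition game_iso (M1 M2 : Type)
  (T1 : seq M1 -> Prop) (A1 : (nat -> M1) -> Prop)
  (T2 : seq M2 -> Prop) (A2 : (nat -> M2) -> Prop) (f : seq M1 -> seq M2) : Prop :=
  chronological T1 T2 f /\ injective_on T1 f /\
  (forall t2, T2 t2 -> exists t1, T1 t1 /\ f t1 = t2) /\
  (forall R, A1 R -> forall S, runs_to f R S -> A2 S) /\
  (forall S, A2 S -> exists R, A1 R /\ runs_to f R S).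

Definition prop_countable (M : Type) (T : seq M -> Prop) (A : (nat -> M) -> Prop) : Prop :=
  countable_set T /\ countable_set A.

Definition prop_universal (M : Type) (T : seq M -> Prop) (A : (nat -> M) -> Prop) : Prop :=
  forall (M' : Type) (TC : seq M' -> Prop) (AC : (nat -> M') -> Prop),
    is_game TC AC -> finite_game TC ->
    exists f : seq M' -> seq M, game_embedding TC AC T A f.

Definition prop_ultrahomogeneous (M : Type) (T : seq M -> Prop) (A : (nat -> M) -> Prop)
  : Prop :=
  forall (M' : Type) (TC : seq M' -> Prop) (AC : (nat -> M') -> Prop),
    is_game TC AC -> finite_game TC ->
    forall f g : seq M' -> seq M,
      game_embedding TC AC T A f -> game_embedding TC AC T A g ->
      exists u : seq M -> seq M, game_iso T A T A u /\ (forall t, TC t -> u (f t) = g t).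

Definition T_FL : seq nat -> Prop := fun _ => True.
Definition c00 : (nat -> nat) -> Prop := fun R => exists N, forall n, N <= n -> R n = 0.

(* Main.v *)
Require Import Defs.
From mathcomp Require Import all_boot.
From Stdlib Require Import ClassicalEpsilon FunctionalExtensionality Classical.
Set Implicit Arguments.
Notation pre := Defs.prefix. Unset Strict Implicit. Unset Printing Implicit Defensive.

Definition pb (P : Prop) : bool := if excluded_middle_informative P then true else false.
Lemma pbP (P : Prop) : reflect P (pb P).
Proof. by rewrite /pb; case: excluded_middle_informative => h; constructor. Qed.

Lemma size_prefix M (R : nat -> M) n : size (pre R n) = n.
Proof. exact: size_mkseq. Qed.
Lemma nth_prefix M (R : nat -> M) n i x : i < n -> nth x (pre R n) i = R i.
Proof. exact: nth_mkseq. Qed.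
Lemma prefixS M (R : nat -> M) n : pre R n.+1 = rcons (pre R n) (R n).
Proof. exact: mkseqS. Qed.
Lemma take_prefix M (R : nat -> M) m n : m <= n -> take m (pre R n) = pre R m.
Proof. by move=> h; rewrite /Defs.prefix -map_take take_iota (minn_idPl h). Qed.
Lemma prefix_ext M (R R' : nat -> M) N :
  (forall n, N <= n -> pre R n = pre R' n) -> R = R'.
Proof.
move=> h; apply: functional_extensionality => m.
have e := h (maxn N m.+1) (leq_maxl _ _).
have hm : m < maxn N m.+1 by rewrite leq_max ltnSn orbT.
by rewrite -(nth_prefix R (R m) hm) e nth_prefix.
Qed.
Lemma coherent_run M (t : nat -> seq M) :
  (forall n, size (t n) = n) -> (forall m n, m <= n -> take m (t n) = t m) ->
  exists R, forall n, pre R n = t n.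
Proof.
move=> hs hc.
case E: (t 1) => [|x0 s]; first by move: (hs 1); rewrite E.
exists (fun i => nth x0 (t i.+1) i) => n.
rewrite /Defs.prefix -[RHS](mkseq_nth x0) hs; apply/eq_in_map => i.
rewrite mem_iota add0n => /andP[_ hi].
by rewrite -(hc i.+1 n hi) nth_take.
Qed.
Section Lab.
Variables (M : Type) (sg : seq M -> M -> nat).
Fixpoint laux (acc t : seq M) : seq nat :=
  match t with [::] => [::] | x :: t' => sg acc x :: laux (rcons acc x) t' end.
Definition lmap t := laux [::] t.
Lemma laux_rcons acc t x : laux acc (rcons t x) = rcons (laux acc t) (sg (acc ++ t) x).
Proof.
elim: t acc => [|y t IH] acc /=; first by rewrite cats0.
by rewrite IH cat_rcons.
Qed.
Lemma lmap_rcons t x : lmap (rcons t x) = rcons (lmap t) (sg t x).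
Proof. exact: laux_rcons. Qed.
Lemma size_lmap t : size (lmap t) = size t.
Proof. rewrite /lmap; elim: t [::] => [|x t IH] acc //=; by rewrite IH. Qed.
Lemma lmap_take k t : lmap (take k t) = take k (lmap t).
Proof. rewrite /lmap; elim: t [::] k => [|x t IH] acc [|k] //=; by rewrite IH. Qed.

Variable rho : seq M -> nat -> M.
Definition linv (s : seq nat) := foldl (fun acc y => rcons acc (rho acc y)) [::] s.
Lemma linv_rcons s y : linv (rcons s y) = rcons (linv s) (rho (linv s) y).
Proof. exact: foldl_rcons. Qed.
Lemma size_linv s : size (linv s) = size s.
Proof. elim/last_ind: s => [|s y IH] //; by rewrite linv_rcons !size_rcons IH. Qed.
Lemma linv_take k s : linv (take k s) = take k (linv s).
Proof.
elim/last_ind: s k => [|s y IH] k; first by case: k.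
rewrite linv_rcons -!cats1 !take_cat size_linv.
case: ifP => _; first exact: IH.
by case: (k - size s) => [|j] /=; rewrite ?cats0 // cats1 linv_rcons cats1.
Qed.

Variable T : seq M -> Prop.
Hypothesis takeT : forall t k, T t -> T (take k t).
Lemma T_rcons t x : T (rcons t x) -> T t.
Proof. by move/(takeT (size t)); rewrite -cats1 take_size_cat. Qed.

Lemma lmap_inj :
  (forall t x y, T (rcons t x) -> T (rcons t y) -> sg t x = sg t y -> x = y) ->
  injective_on T lmap.
Proof.
move=> hc s; elim/last_ind: s => [|s x IH] t.
  by case/lastP: t => [|t y] // _ _ /(congr1 size); rewrite lmap_rcons size_rcons.
case/lastP: t => [|t y]; first by move=> _ _ /(congr1 size); rewrite lmap_rcons size_rcons.
move=> hs ht; rewrite !lmap_rcons => /rcons_inj [e1 e2].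
have e := IH t (T_rcons hs) (T_rcons ht) e1; subst t.
by rewrite (hc s x y hs ht e2).
Qed.

Lemma lmap_linv :
  T [::] -> (forall t y, T t -> T (rcons t (rho t y)) /\ sg t (rho t y) = y) ->
  forall s, T (linv s) /\ lmap (linv s) = s.
Proof.
move=> h0 hr; elim/last_ind => [|s y [IH1 IH2]] //.
rewrite linv_rcons lmap_rcons IH2; have [a b] := hr _ y IH1; by rewrite b.
Qed.
End Lab.

Lemma runs_lmap M (sg : seq M -> M -> nat) R S :
  runs_to (lmap sg) R S -> forall n, S n = sg (pre R n) (R n).
Proof.
move=> h n; have := h n.+1; rewrite !prefixS lmap_rcons h.
by case/rcons_inj.
Qed.

Lemma bar_exists M1 M2 (T1 : seq M1 -> Prop) (T2 : seq M2 -> Prop) f R :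
  chronological T1 T2 f -> Run T1 R -> exists S, runs_to f R S /\ Run T2 S.
Proof.
move=> hf hR.
have [S hS] : exists S, forall n, pre S n = f (pre R n).
  apply: coherent_run => [n|m n hmn].
    by have [_ [-> _]] := hf _ (hR n); rewrite size_prefix.
  by have [_ [_ <-]] := hf _ (hR n); rewrite take_prefix.
exists S; split => [n|n]; first by rewrite hS.
by rewrite hS; have [] := hf _ (hR n).
Qed.
Section Idx.
Variables (M : Type) (W : nat -> (nat -> M) -> Prop) (d0 : nat -> M).
Hypothesis Wfun : forall i R R', W i R -> W i R' -> R = R'.
Definition Qx (t : seq M) i := exists R, W i R /\ pre R (size t) = t.
Lemma exQb t : (exists i, Qx t i) -> exists i, pb (Qx t i).
Proof. by case=> i h; exists i; apply/pbP. Qed.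
Definition idx t : nat :=
  match excluded_middle_informative (exists i, Qx t i) with
  | left h => ex_minn (exQb h) | right _ => 0 end.
Lemma idx_spec t : (exists i, Qx t i) -> Qx t (idx t) /\ forall i, Qx t i -> idx t <= i.
Proof.
rewrite /idx; case: excluded_middle_informative => // h _.
case: ex_minnP => m /pbP hm hmin; split => // i hi; apply: hmin; exact/pbP.
Qed.
Definition rep t : nat -> M :=
  match excluded_middle_informative (Qx t (idx t)) with
  | left h => proj1_sig (constructive_indefinite_description _ h) | right _ => d0 end.
Lemma rep_spec t : (exists i, Qx t i) -> W (idx t) (rep t) /\ pre (rep t) (size t) = t.
Proof.
move=> /idx_spec [h _]; rewrite /rep; case: excluded_middle_informative => // h'.
exact: proj2_sig (constructive_indefinite_description _ h').
Qed.
Lemma idx_mono R n m : (exists i, Qx (pre R m) i) -> n <= m -> idx (pre R n) <= idx (pre R m).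
Proof.
move=> hx hnm; have [[R' [hW hp]] _] := idx_spec hx.
have hq : Qx (pre R n) (idx (pre R m)).
  exists R'; split => //; rewrite size_prefix -(take_prefix R' hnm) -(take_prefix R hnm).
  by rewrite size_prefix in hp; rewrite hp.
by have [_ hmin] := idx_spec (ex_intro _ _ hq); apply: hmin.
Qed.
Lemma idx_le R j n : W j R -> idx (pre R n) <= j.
Proof.
move=> hW; have hq : Qx (pre R n) j by exists R; rewrite size_prefix.
by have [_ hmin] := idx_spec (ex_intro _ _ hq); apply: hmin.
Qed.
Lemma QxW R j n : W j R -> exists i, Qx (pre R n) i.
Proof. by move=> hW; exists j, R; rewrite size_prefix. Qed.
Lemma idx_stab R j : W j R ->
  exists N, forall n, N <= n -> idx (pre R n) = idx (pre R N) /\ W (idx (pre R n)) R.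
Proof.
move=> hW.
pose P c := pb (exists n, idx (pre R n) = c).
have exP : exists c, P c by exists (idx (pre R 0)); apply/pbP; exists 0.
have ubP : forall c, P c -> c <= j by move=> c /pbP [n <-]; exact: idx_le hW.
case: (ex_maxnP exP ubP) => c /pbP [N hN] hmax.
have he : forall n, N <= n -> idx (pre R n) = c.
  move=> n hn; apply/eqP; rewrite eqn_leq; apply/andP; split.
    by apply: hmax; apply/pbP; exists n.
  by rewrite -hN; apply: idx_mono (QxW _ hW) hn.
have hrep : forall n, N <= n -> rep (pre R n) = rep (pre R N).
  move=> n hn; have [h1 _] := rep_spec (QxW n hW); have [h2 _] := rep_spec (QxW N hW).
  by apply: Wfun h1 _; rewrite he // -(he N (leqnn N)).
have eR : rep (pre R N) = R.
  apply: (prefix_ext (N := N)) => n hn; rewrite -(hrep n hn).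
  by have [_ ] := rep_spec (QxW n hW); rewrite size_prefix.
exists N => n hn; rewrite !he //; split => //.
by have [h _] := rep_spec (QxW N hW); rewrite eR hN in h.
Qed.
Lemma idx_back R N : (forall n, exists i, Qx (pre R n) i) ->
  (forall n, N <= n -> R n = rep (pre R n) n) -> exists i, W i R.
Proof.
move=> hx hR; set Rs := rep (pre R N).
have [hWs hps] := rep_spec (hx N); rewrite size_prefix in hps.
have key : forall k, pre Rs (N + k) = pre R (N + k).
  elim=> [|k IH]; first by rewrite addn0.
  have hq : Qx (pre R (N + k)) (idx (pre R N)) by exists Rs; rewrite size_prefix.
  have [_ hmin] := idx_spec (hx (N + k)).
  have e : idx (pre R (N + k)) = idx (pre R N).
    apply/eqP; rewrite eqn_leq hmin //=; exact: idx_mono (hx _) (leq_addr _ _).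
  have [hW' _] := rep_spec (hx (N + k)); rewrite e in hW'.
  have er := Wfun hW' hWs.
  have := hR (N + k) (leq_addr _ _); rewrite er => eRn.
  by rewrite addnS !prefixS IH eRn.
have eR : Rs = R.
  apply: (prefix_ext (N := N)) => n hn; rewrite -(subnKC hn); exact: key.
by exists (idx (pre R N)); rewrite /Rs in eR; rewrite -{2}eR.
Qed.
End Idx.
Lemma extend_run M (T : seq M -> Prop) t :
  is_game_tree T -> T t -> exists R, Run T R /\ pre R (size t) = t.
Proof.
move=> [hT hE] ht; have [x0 _] := hE t ht.
pose ch s := epsilon (inhabits x0) (fun x => T (rcons s x)).
pose q n := iter n (fun s => rcons s (ch s)) t.
have hq : forall n, T (q n).
  elim=> [|n IH] //=; rewrite /ch; apply: (epsilon_spec (inhabits x0) (fun x => T (rcons (q n) x))).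
  exact: hE.
have sq : forall n, size (q n) = size t + n.
  by elim=> [|n IH] /=; rewrite ?addn0 // size_rcons IH addnS.
have pq : forall m n, m <= n -> take (size (q m)) (q n) = q m.
  move=> m n /subnK <-; elim: (n - m) => [|k IH]; first by rewrite add0n take_size.
  by rewrite addSn /= -cats1 takel_cat ?IH // sq (sq (k + m)) leq_add2l leq_addl.
have [R hR] : exists R, forall n, pre R n = take n (q n).
  apply: coherent_run => [n|m n hmn]; first by rewrite size_takel // sq leq_addl.
  rewrite take_takel // -(pq m n hmn) take_takel // sq leq_addl //.
exists R; split => [n|]; first by rewrite hR; apply: hT.
by rewrite hR; have /= := pq 0 (size t) (leq0n _).
Qed.
Lemma pre_eq M (R R' : nat -> M) n : (forall j, j < n -> R j = R' j) -> pre R n = pre R' n.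
Proof. move=> h; apply/eq_in_map => j; rewrite mem_iota add0n => /andP[_]; exact: h. Qed.

Lemma countable_FL : prop_countable T_FL c00.
Proof.
split.
  exists (@pickle (seq nat)) => x y _ _; exact: (pcan_inj pickleK).
pose g (R : nat -> nat) := match excluded_middle_informative (c00 R) with
  | left h => pickle (pre R (proj1_sig (constructive_indefinite_description _ h)))
  | right _ => 0 end.
exists g => R R' hR hR'; rewrite /g.
case: excluded_middle_informative => // h; case: excluded_middle_informative => // h'.
case: (constructive_indefinite_description _ h) => N /= hN.
case: (constructive_indefinite_description _ h') => N' /= hN' /(pcan_inj pickleK) e.
have eN : N = N' by rewrite -(size_prefix R N) e size_prefix.
subst N'; apply: functional_extensionality => j.
case: (ltnP j N) => hj; last by rewrite hN ?hN'.
by rewrite -(nth_prefix R 0 hj) e nth_prefix.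
Qed.

Lemma univ_FL : prop_universal T_FL c00.
Proof.
move=> M' TC AC [hT hA] [n [e he]].
pose W i R := i < n /\ R = e i /\ Run TC R.
have Wfun : forall i R R', W i R -> W i R' -> R = R' by move=> i R R' [_ [-> _]] [_ [-> _]].
have hEx : forall t, TC t -> exists i, Qx W t i.
  move=> t ht; have [R [hR hp]] := extend_run hT ht; have [i [hi eR]] := he R hR.
  by exists i, R.
pose sg p x := if idx W (rcons p x) == idx W p then (if pb (AC (e (idx W p))) then 0 else 1)
               else (idx W (rcons p x)).+2.
exists (lmap sg); split; [|split].
- move=> t _; split => //; split; [exact: size_lmap | move=> k; exact: lmap_take].
- apply: (lmap_inj (T := TC)); first by case: hT.
  move=> p x y hx hy.
  have key : idx W (rcons p x) = idx W (rcons p y) -> x = y.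
    move=> e1; have [[R1 [hW1 hp1]] _] := idx_spec (hEx _ hx).
    have [[R2 [hW2 hp2]] _] := idx_spec (hEx _ hy).
    rewrite e1 in hW1; have eR := Wfun _ _ _ hW1 hW2; subst R2.
    rewrite !size_rcons in hp1 hp2; rewrite hp1 in hp2; by case/rcons_inj: hp2.
  rewrite /sg; case: eqP => h1; case: eqP => h2.
  + by move=> _; apply: key; rewrite h1 h2.
  + by case: pbP.
  + by case: pbP.
  + by case=> ?; apply: key.
- move=> R hR S hS; have hSn := runs_lmap hS.
  have [j [hj eR]] := he R hR.
  have hWj : W j R by [].
  have [N hN] := idx_stab (e 0) Wfun hWj.
  have hSN : forall m, N <= m -> S m = if pb (AC R) then 0 else 1.
    move=> m hm; rewrite hSn /sg -prefixS.
    have [e1 _] := hN m hm; have [e2 [_ [eR' _]]] := hN m.+1 (leqW hm).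
    have [_ [_ [eRN _]]] := hN N (leqnn N).
    by rewrite e1 e2 eqxx -eRN.
  split.
    case=> N' hN'; apply: NNPP => hAC; have := hSN (maxn N N') (leq_maxl _ _).
    by rewrite hN' ?leq_maxr //; case: pbP.
  move=> hAC; exists N => m hm; rewrite hSN //; by case: pbP.
Qed.
Definition swp (a b z : nat) := if z == a then b else if z == b then a else z.
Lemma swpK a b : involutive (swp a b).
Proof.
move=> z; rewrite /swp; case: (eqVneq z a) => [->|hza].
  by rewrite eqxx; case: eqP.
case: (eqVneq z b) => [->|hzb]; first by rewrite eqxx.
by rewrite (negbTE hza) (negbTE hzb).
Qed.

Lemma perm_ext (F : seq nat) (h : nat -> nat) : {in F &, injective h} ->
  exists sg : nat -> nat, (exists tau, cancel sg tau /\ cancel tau sg) /\ {in F, forall x, sg x = h x}.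
Proof.
elim: F => [|a F IH] hinj.
  by exists id; split => //; exists id.
have [|sg [[tau [c1 c2]] hF]] := IH.
  by move=> x y hx hy; apply: hinj; rewrite inE ?hx ?hy orbT.
case: (boolP (a \in F)) => haF.
  exists sg; split; first by exists tau.
  by move=> x; rewrite inE => /orP [/eqP ->|]; apply: hF.
exists (swp (h a) (sg a) \o sg); split.
  exists (tau \o swp (h a) (sg a)); split => z /=; first by rewrite swpK c1.
  by rewrite c2 swpK.
move=> x; rewrite inE => /orP [/eqP ->|hx] /=.
  by rewrite /swp; case: eqP => [->|_]; rewrite ?eqxx.
rewrite (hF x hx) /swp.
have hxa : x != a by apply: contraNneq haF => <-.
have e1 : h x != h a.
  apply: contra_neq hxa => e; apply: hinj => //; rewrite inE ?hx ?eqxx ?orbT //.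
have e2 : h x != sg a.
  by apply: contra_neq hxa => e; rewrite -hF // in e; rewrite -(c1 x) e c1.
by rewrite (negbTE e1) (negbTE e2).
Qed.

Lemma split_last (X : Type) (x0 : X) (s : seq X) k : size s = k.+1 -> s = rcons (take k s) (nth x0 s k).
Proof. by move=> hs; rewrite -take_nth ?hs // take_oversize ?hs. Qed.
Lemma chron_size M1 M2 (T1 : seq M1 -> Prop) (T2 : seq M2 -> Prop) f t :
  chronological T1 T2 f -> T1 t -> size (f t) = size t.
Proof. by move=> hf ht; have [_ []] := hf t ht. Qed.
Lemma chron_take M1 M2 (T1 : seq M1 -> Prop) (T2 : seq M2 -> Prop) f t k :
  chronological T1 T2 f -> T1 t -> f (take k t) = take k (f t).
Proof. by move=> hf ht; have [_ [_ ->]] := hf t ht. Qed.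

Lemma uh_FL : prop_ultrahomogeneous T_FL c00.
Proof.
move=> M' TC AC [[hT hE] hA] [n [e he]] f g [fc [fi fa]] [gc [gi ga]].
have hT' : is_game_tree TC by [].
pose P s := exists t, TC t /\ f t = s.
pose Qy (s : seq nat) y := exists c, TC c /\ f c = rcons s y.
pose L (s : seq nat) := [seq nth 0 (f (pre (e i) (size s).+1)) (size s) | i <- iota 0 n].
pose F s := filter (fun y => pb (Qy s y)) (L s).
pose hm s y := match excluded_middle_informative (Qy s y) with
  | left h => nth 0 (g (proj1_sig (constructive_indefinite_description _ h))) (size s)
  | right _ => y end.
have child : forall c k, TC c -> size c = k.+1 ->
    f c = rcons (f (take k c)) (nth 0 (f c) k) /\ g c = rcons (g (take k c)) (nth 0 (g c) k).
  move=> c k hc hs; rewrite (chron_take _ fc hc) (chron_take _ gc hc).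
  by split; apply: split_last; rewrite ?(chron_size fc hc) ?(chron_size gc hc).
have hmE : forall s y c, TC c -> f c = rcons s y -> hm s y = nth 0 (g c) (size s).
  move=> s y c hc hfc; rewrite /hm; case: excluded_middle_informative => [h|[]]; last by exists c.
  case: (constructive_indefinite_description _ h) => c' [hc' hfc'] /=.
  by rewrite (fi c' c hc' hc) // hfc hfc'.
have hinj : forall s, {in F s &, injective (hm s)}.
  move=> s y y'; rewrite !mem_filter => /andP [/pbP [c [hc hfc]] _] /andP [/pbP [c' [hc' hfc']] _].
  rewrite (hmE s y c hc hfc) (hmE s y' c' hc' hfc').
  have sc : size c = (size s).+1 by rewrite -(chron_size fc hc) hfc size_rcons.
  have sc' : size c' = (size s).+1 by rewrite -(chron_size fc hc') hfc' size_rcons.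
  have [hf1 hg1] := child c _ hc sc; have [hf2 hg2] := child c' _ hc' sc'.
  have et : take (size s) c = take (size s) c'.
    apply: fi; try exact: hT.
    by rewrite (chron_take _ fc hc) (chron_take _ fc hc') hfc hfc' -!cats1 !take_size_cat.
  move=> ey; have ec : c = c'.
    by apply: gi => //; rewrite hg1 hg2 et ey.
  by subst c'; move: hfc'; rewrite hfc => /rcons_inj [].
pose sg s := if pb (P s) then proj1_sig (constructive_indefinite_description _ (perm_ext (hinj s))) else id.
have sgbij : forall s, exists tau, cancel (sg s) tau /\ cancel tau (sg s).
  move=> s; rewrite /sg /pb; case: excluded_middle_informative => _ /=; last by exists id.
  exact: (proj2_sig (constructive_indefinite_description _ (perm_ext (hinj s)))).1.
have sgP : forall s, P s -> {in F s, forall y, sg s y = hm s y}.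
  move=> s hs; rewrite /sg /pb; case: excluded_middle_informative => // _ /=.
  exact: (proj2_sig (constructive_indefinite_description _ (perm_ext (hinj s)))).2.
have sgN : forall s, ~ P s -> sg s = id by move=> s hs; rewrite /sg /pb; case: excluded_middle_informative.
pose rho s := proj1_sig (constructive_indefinite_description _ (sgbij s)).
have rhoP : forall s, cancel (sg s) (rho s) /\ cancel (rho s) (sg s).
  move=> s; exact: (proj2_sig (constructive_indefinite_description _ (sgbij s))).
pose u := lmap sg.
have ufg : forall t, TC t -> u (f t) = g t.
  elim/last_ind => [|t x IH] ht.
    have /size0nil -> : size (f [::]) = 0 by rewrite (chron_size fc ht).
    by have /size0nil -> : size (g [::]) = 0 by rewrite (chron_size gc ht).
  have ht' : TC t by apply: (T_rcons hT ht).
  have sc : size (rcons t x) = (size t).+1 by rewrite size_rcons.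
  have [hf1 hg1] := child _ _ ht sc.
  move: hf1 hg1; rewrite -cats1 take_size_cat // cats1 => hf1 hg1.
  set y := nth 0 (f (rcons t x)) (size t) in hf1.
  rewrite hf1 /u lmap_rcons -/u IH // hg1; congr rcons.
  have sft : size (f t) = size t by rewrite (chron_size fc ht').
  have hy : y \in F (f t).
    rewrite mem_filter; apply/andP; split; first by apply/pbP; exists (rcons t x).
    have [R [hR hp]] := extend_run hT' ht; have [i [hi eR]] := he R hR; subst R.
    apply/mapP; exists i; first by rewrite mem_iota.
    by rewrite sft -(size_rcons t x) hp.
  have hPf : P (f t) by exists t.
  by rewrite (sgP (f t) hPf y hy) (hmE _ _ _ ht hf1) sft.
have Pt : forall s k, P s -> P (take k s).
  by move=> s k [t [ht <-]]; exists (take k t); split; [exact: hT | exact: chron_take _ fc ht].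
have key : forall R S, runs_to u R S -> (c00 R <-> c00 S).
  move=> R S hS; have hSn := runs_lmap hS.
  case: (classic (forall m, P (pre R m))) => hP.
    pose tm m := epsilon (inhabits [::]) (fun t => TC t /\ f t = pre R m).
    have htm : forall m, TC (tm m) /\ f (tm m) = pre R m.
      move=> m; exact: (epsilon_spec (inhabits [::]) (fun t => TC t /\ f t = pre R m) (hP m)).
    have [R' hR'] : exists R', forall m, pre R' m = tm m.
      apply: coherent_run => [m|k m hkm].
        by have [h1 h2] := htm m; rewrite -(chron_size fc h1) h2 size_prefix.
      have [h1 h2] := htm m; have [h3 h4] := htm k.
      apply: fi => //; first exact: hT.
      by rewrite (chron_take _ fc h1) h2 h4 take_prefix.
    have rR' : Run TC R' by move=> m; rewrite hR'; case: (htm m).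
    have fR : runs_to f R' R by move=> m; rewrite hR'; case: (htm m).
    have [S' [gS _]] := bar_exists gc rR'.
    have eS : S = S'.
      apply: (prefix_ext (N := 0)) => m _; rewrite -hS -gS hR'.
      by have [h1 h2] := htm m; rewrite -h2 ufg.
    subst S'; rewrite (fa R' rR' R fR) (ga R' rR' S gS) //.
  have [m0 hm0] : exists m0, ~ P (pre R m0).
    by apply: NNPP => hn; apply: hP => m; apply: NNPP => hmm; apply: hn; exists m.
  have eq : forall m, m0 <= m -> S m = R m.
    move=> m hmm; rewrite hSn sgN // => hPm; apply: hm0.
    by rewrite -(take_prefix R hmm); apply: Pt.
  split => [[N hN]|[N hN]]; exists (maxn N m0) => m hmm.
    by rewrite eq ?hN //; [apply: leq_trans hmm; apply: leq_maxl | apply: leq_trans hmm; apply: leq_maxr].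
  by rewrite -eq ?hN //; [apply: leq_trans hmm; apply: leq_maxl | apply: leq_trans hmm; apply: leq_maxr].
exists u; split; last by move=> t ht; apply: ufg.
split; [|split; [|split; [|split]]].
- by move=> t _; split => //; split; [exact: size_lmap | move=> k; exact: lmap_take].
- apply: (lmap_inj (T := T_FL)) => // s x y _ _ exy.
  by rewrite -((rhoP s).1 x) exy (rhoP s).1.
- move=> t2 _; have [_ h] := lmap_linv (T := T_FL) (sg := sg) (rho := rho) I
     (fun t y _ => conj I ((rhoP t).2 y)) t2.
  by exists (linv rho t2).
- move=> R hR S hS; exact/(key R S hS).
- move=> S hS.
  have [R hR] : exists R, forall m, pre R m = linv rho (pre S m).
    apply: coherent_run => [m|k m hkm]; first by rewrite size_linv size_prefix.
    by rewrite -linv_take take_prefix.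
  have hRS : runs_to u R S.
    move=> m; rewrite hR.
    by have [_ h] := lmap_linv (T := T_FL) (sg := sg) (rho := rho) I
       (fun t y _ => conj I ((rhoP t).2 y)) (pre S m).
  by exists R; split => //; apply/(key R S hRS).
Qed.
Definition TCk (k m : nat) (s : seq nat) : Prop := forall j, nth 0 s j <= (j == k) * m.
Definition ACk (k m : nat) (ac : nat -> Prop) (R : nat -> nat) : Prop := Run (TCk k m) R /\ ac (R k).
Definition ek (k i : nat) : nat -> nat := fun j => if j == k then i else 0.

Lemma RunCk k m R : Run (TCk k m) R <-> forall j, R j <= (j == k) * m.
Proof.
split => h.
  move=> j; have := h j.+1 j; by rewrite nth_prefix.
move=> n j; case: (ltnP j n) => hj; first by rewrite nth_prefix.
by rewrite nth_default ?size_prefix.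
Qed.

Lemma Ck_game k m ac : is_game (TCk k m) (ACk k m ac).
Proof.
split; last by move=> R [].
split.
  move=> t i ht j; case: (ltnP j i) => hj; first by rewrite nth_take.
  rewrite nth_default //; apply: leq_trans hj; rewrite size_take_min; exact: geq_minl.
move=> t ht; exists 0 => j; rewrite nth_rcons; case: ifP => _; first exact: ht.
by case: ifP.
Qed.

Lemma Ck_finite k m : finite_game (TCk k m).
Proof.
exists m.+1, (ek k) => R /RunCk hR; exists (R k); split.
  by have := hR k; rewrite eqxx mul1n.
apply: functional_extensionality => j; rewrite /ek; case: eqP => [->//|/eqP hj].
by apply/eqP; rewrite -leqn0; have := hR j; rewrite (negbTE hj).
Qed.

Lemma Run_ek k m i : i <= m -> Run (TCk k m) (ek k i).
Proof. by move=> hi; apply/RunCk => j; rewrite /ek; case: eqP => //; rewrite mul1n. Qed.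

Lemma TCk0 k s : TCk k 0 s -> s = nseq (size s) 0.
Proof.
move=> h; apply: (eq_from_nth (x0 := 0)); first by rewrite size_nseq.
by move=> i hi; rewrite nth_nseq hi; apply/eqP; rewrite -leqn0; have := h i; rewrite muln0.
Qed.

Lemma TCk_nseq k m j : TCk k m (nseq j 0).
Proof. by move=> i; rewrite nth_nseq; case: ifP. Qed.

Lemma pre_ek k i j : j <= k -> pre (ek k i) j = nseq j 0.
Proof.
move=> hj; apply: (eq_from_nth (x0 := 0)); first by rewrite size_prefix size_nseq.
move=> l; rewrite size_prefix => hl; rewrite nth_prefix // nth_nseq hl /ek.
by case: eqP => // e; move: hl; rewrite e ltnNge hj.
Qed.

Lemma take_prefix_min M (R : nat -> M) j n : take j (pre R n) = pre R (minn j n).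
Proof. by rewrite /Defs.prefix -map_take take_iota. Qed.

Lemma restr_emb M (T : seq M -> Prop) A k m ac f :
  game_embedding (TCk k m) (ACk k m ac) T A f -> game_embedding (TCk k 0) (ACk k 0 ac) T A f.
Proof.
have sub : forall s, TCk k 0 s -> TCk k m s.
  by move=> s h j; apply: leq_trans (h j) _; rewrite muln0.
move=> [fc [fi fa]]; split; [|split].
- by move=> t /sub; apply: fc.
- by move=> s t /sub hs /sub ht; apply: fi.
- move=> R hR S hS; have hR' : Run (TCk k m) R by move=> n; apply: sub.
  rewrite (fa R hR' S hS); rewrite /ACk; tauto.
Qed.

Lemma path_emb M (T : seq M -> Prop) A k ac R0 :
  Run T R0 -> (ac 0 <-> A R0) ->
  game_embedding (TCk k 0) (ACk k 0 ac) T A (fun s => pre R0 (size s)).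
Proof.
move=> hR0 hac; split; [|split].
- move=> t _; split => //; split; first by rewrite size_prefix.
  by move=> j; rewrite take_prefix_min size_take_min.
- move=> s t hs ht /(congr1 size); rewrite !size_prefix => e.
  by rewrite (TCk0 hs) (TCk0 ht) e.
- move=> R hR S hS.
  have eS : R0 = S by apply: (prefix_ext (N := 0)) => n _; rewrite -hS size_prefix.
  subst S; have := (proj1 (RunCk k 0 R) hR k); rewrite muln0 leqn0 => /eqP hRk.
  by rewrite /ACk hRk; tauto.
Qed.
Lemma cnt_lt (p : pred nat) a b : p a -> a < b -> count p (iota 0 a) < count p (iota 0 b).
Proof.
move=> pa hab.
have [d ->] : exists d, b = a + d.+1.
  by exists (b - a).-1; rewrite prednK ?subn_gt0 // subnKC // ltnW.
rewrite iotaD count_cat /= add0n pa -{1}(addn0 (count p (iota 0 a))) ltn_add2l.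
by rewrite add1n.
Qed.

Lemma cnt_surj (p : pred nat) : (forall B, exists n, B <= n /\ p n) ->
  forall m, exists c, p c /\ count p (iota 0 c) = m.
Proof.
move=> hinf m.
have unb : forall m, exists c, m < count p (iota 0 c).
  elim=> [|j [c hc]].
    have [n [_ pn]] := hinf 0; exists n.+1; exact: leq_ltn_trans (leq0n _) (cnt_lt pn (ltnSn n)).
  have [n [hn pn]] := hinf c; exists n.+1.
  apply: leq_trans _ (cnt_lt pn (ltnSn n)); rewrite ltnS (leq_trans hc) //.
  rewrite -(subnKC hn) iotaD count_cat; exact: leq_addr.
have exQ : exists c, m < count p (iota 0 c.+1).
  have [c hc] := unb m; exists c; apply: leq_trans hc _.
  by rewrite -addn1 iotaD count_cat leq_addr.
case: (ex_minnP exQ) => c hc hmin; exists c.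
have hle : count p (iota 0 c) <= m.
  case: c hc hmin => [|c] hc hmin //; rewrite leqNgt; apply/negP => h.
  by have := hmin c h; rewrite ltnn.
move: hc; rewrite -(addn1 c) iotaD count_cat add0n /= addn0.
case: (p c) => /= h.
  by split => //; apply/eqP; rewrite eqn_leq hle /=; move: h; rewrite addn1 ltnS.
by move: (leq_ltn_trans hle h); rewrite addn0 ltnn.
Qed.

Lemma char_FL M (T : seq M -> Prop) (A : (nat -> M) -> Prop) :
  is_game T A -> prop_countable T A -> prop_universal T A -> prop_ultrahomogeneous T A ->
  exists u : seq M -> seq nat, game_iso T A T_FL c00 u.
Proof.
move=> [hgT hA] [[gT gTi] [gA gAi]] hU hH.
have hgT' := hgT; case: hgT' => hT hE.
have T0 : T [::].
  have [f [fc _]] := hU _ _ _ (Ck_game 0 0 (fun _ => False)) (Ck_finite 0 0).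
  have [h _] := fc [::] (TCk_nseq 0 0 0); by move: (hT _ 0 h); rewrite take0.
have [x0 _] := hE [::] T0.
have transp : forall t R0, Run T R0 -> pre R0 (size t) = t -> forall m ac, (ac 0 <-> A R0) ->
    exists f u, game_embedding (TCk (size t) m) (ACk (size t) m ac) T A f /\ game_iso T A T A u /\
      forall s, TCk (size t) 0 s -> u (f s) = pre R0 (size s).
  move=> t R0 hR0 hp m ac hac.
  have [f hf] := hU _ _ _ (Ck_game (size t) m ac) (Ck_finite (size t) m).
  have [u [hu hfg]] := hH _ _ _ (Ck_game (size t) 0 ac) (Ck_finite (size t) 0) f
      (fun s => pre R0 (size s)) (restr_emb hf) (path_emb (size t) hR0 hac).
  by exists f, u.
have density : forall t, T t -> exists R, A R /\ pre R (size t) = t.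
  move=> t ht; have [R0 [hR0 hp]] := extend_run hgT ht.
  case: (classic (A R0)) => hA0; first by exists R0.
  have hac : (0 = 1 <-> A R0) by split; [by [] | move=> h; by case: (hA0 h)].
  have [f [u [[fc [fi fa]] [[uc [ui [us [uf ub]]]] hfg]]]] := transp t R0 hR0 hp 1 (fun i => i = 1) hac.
  have rQ : Run (TCk (size t) 1) (ek (size t) 1) by apply: Run_ek.
  have [Rf [hRf rRf]] := bar_exists fc rQ.
  have ARf : A Rf by apply/(fa _ rQ _ hRf); split => //; rewrite /ek eqxx.
  have [S [hS _]] := bar_exists uc rRf.
  exists S; split; first exact: (uf _ ARf _ hS).
  rewrite -hS -hRf pre_ek // hfg ?size_nseq //; exact: TCk_nseq.
have children : forall t, T t -> forall (d : M) B, exists y, T (rcons t y) /\ y <> d /\ B <= gT (rcons t y).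
  move=> t ht d B; have [R0 [hR0 hp]] := extend_run hgT ht.
  have hac : (A R0 <-> A R0) by [].
  have [f [u [[fc [fi fa]] [[uc [ui _]] hfg]]]] := transp t R0 hR0 hp B.+1 (fun _ => A R0) hac.
  pose c i := pre (ek (size t) i) (size t).+1.
  have hc : forall i, i <= B.+1 -> TCk (size t) B.+1 (c i) by move=> i hi; apply: Run_ek.
  pose v i := u (f (c i)).
  have hv : forall i, i <= B.+1 -> T (v i) /\ v i = rcons t (nth x0 (v i) (size t)).
    move=> i hi; have [hf1 [sf tf]] := fc _ (hc i hi); have [hu1 [su tu]] := uc _ hf1.
    split => //.
    have sv : size (v i) = (size t).+1 by rewrite /v su sf size_prefix.
    have tv : take (size t) (v i) = t.
      rewrite /v -tu -tf take_prefix ?leqnSn // pre_ek // hfg ?size_nseq //; exact: TCk_nseq.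
    by rewrite {1}(split_last x0 sv) tv.
  apply: NNPP => hn.
  pose cs := map (fun i => gT (v i)) (iota 0 B.+2).
  have hu : uniq cs.
    rewrite map_inj_in_uniq ?iota_uniq // => i j; rewrite !mem_iota !add0n /= => hi hj e.
    have [hvi _] := hv i hi; have [hvj _] := hv j hj.
    have e1 := gTi _ _ hvi hvj e.
    have e2 := ui _ _ (fc _ (hc i hi)).1 (fc _ (hc j hj)).1 e1.
    have e3 := fi _ _ (hc i hi) (hc j hj) e2.
    by have := congr1 (fun s => nth 0 s (size t)) e3; rewrite /= /c !nth_prefix // /ek eqxx.
  have hsub : {subset cs <= gT (rcons t d) :: iota 0 B}.
    move=> z /mapP [i]; rewrite mem_iota add0n /= => hi ->.
    have [hvi ev] := hv i hi; rewrite inE mem_iota add0n /=.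
    set y := nth x0 (v i) (size t) in ev.
    case: (classic (y = d)) => hyd.
      by rewrite ev hyd eqxx.
    apply/orP; right; rewrite ltnNge; apply/negP => hB; apply: hn; exists y.
    by rewrite -ev; split => //; split.
  by have := uniq_leq_size hu hsub; rewrite size_map /= !size_iota ltnn.
pose W i R := A R /\ gA R = i.
have Wfun : forall i R R', W i R -> W i R' -> R = R'.
  by move=> i R R' [h1 e1] [h2 e2]; apply: gAi => //; rewrite e1 e2.
pose d0 := fun _ : nat => x0.
have Ex : forall t, T t -> exists i, Qx W t i.
  by move=> t ht; have [R [hR hp]] := density t ht; exists (gA R), R.
pose D t := rep W d0 t (size t).
have hD : forall t, T t -> T (rcons t (D t)).
  move=> t ht; have [[hAr _] hp] := rep_spec d0 (Ex t ht).
  by have := hA _ hAr (size t).+1; rewrite prefixS hp.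
pose Pc t n := exists y, T (rcons t y) /\ y <> D t /\ gT (rcons t y) = n.
pose rank t x := count (fun n => pb (Pc t n)) (iota 0 (gT (rcons t x))).
pose lab t x := if pb (x = D t) then 0 else (rank t x).+1.
have labinj : forall t x y, T (rcons t x) -> T (rcons t y) -> lab t x = lab t y -> x = y.
  move=> t x y hx hy; rewrite /lab; case: pbP => hxd; case: pbP => hyd //; first by rewrite hxd hyd.
  move=> [] er.
  have px : Pc t (gT (rcons t x)) by exists x.
  have py : Pc t (gT (rcons t y)) by exists y.
  case: (ltngtP (gT (rcons t x)) (gT (rcons t y))) => hc.
  - have := cnt_lt (p := fun n => pb (Pc t n)) (introT (pbP _) px) hc.
    by rewrite -/(rank t x) -/(rank t y) er ltnn.
  - have := cnt_lt (p := fun n => pb (Pc t n)) (introT (pbP _) py) hc.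
    by rewrite -/(rank t x) -/(rank t y) er ltnn.
  - by have /rcons_inj [] := gTi _ _ hx hy hc.
have labsurj : forall t z, T t -> exists x, T (rcons t x) /\ lab t x = z.
  move=> t [|m] ht.
    by exists (D t); split; [exact: hD | rewrite /lab; case: pbP].
  have hinf : forall B, exists n, B <= n /\ pb (Pc t n).
    move=> B; have [y [hy [hyd hB]]] := children t ht (D t) B.
    by exists (gT (rcons t y)); split => //; apply/pbP; exists y.
  have [c [/pbP [y [hy [hyd hgy]]] hcnt]] := cnt_surj hinf m.
  exists y; split => //; rewrite /lab; case: pbP => // _.
  by rewrite /rank hgy hcnt.
pose rho t z := epsilon (inhabits x0) (fun x => T (rcons t x) /\ lab t x = z).
have rhoP : forall t z, T t -> T (rcons t (rho t z)) /\ lab t (rho t z) = z.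
  move=> t z ht; exact: (epsilon_spec (inhabits x0) (fun x => T (rcons t x) /\ lab t x = z) (labsurj t z ht)).
have hlinv := lmap_linv T0 rhoP.
exists (lmap lab); split; [|split; [|split; [|split]]].
- by move=> t _; split => //; split; [exact: size_lmap | move=> k; exact: lmap_take].
- exact: (lmap_inj hT labinj).
- by move=> t2 _; exists (linv rho t2); exact: hlinv.
- move=> R hR S hS; have hSn := runs_lmap hS.
  have hW : W (gA R) R by [].
  have [N hN] := idx_stab d0 Wfun hW.
  exists N => n hn; rewrite hSn /lab; case: pbP => // []; rewrite /D.
  have [_ hWn] := hN n hn; have [hWr _] := rep_spec d0 (QxW n hWn).
  by rewrite (Wfun _ _ _ hWr hWn) size_prefix.
- move=> S [N hN].
  have [R hR] : exists R, forall m, pre R m = linv rho (pre S m).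
    apply: coherent_run => [m|k m hkm]; first by rewrite size_linv size_prefix.
    by rewrite -linv_take take_prefix.
  have hRS : runs_to (lmap lab) R S by move=> m; rewrite hR; case: (hlinv (pre S m)).
  exists R; split => //.
  have hTR : forall m, T (pre R m) by move=> m; rewrite hR; case: (hlinv (pre S m)).
  have [i [hAR _]] := idx_back Wfun (fun m => Ex _ (hTR m)) (N := N) (R := R) (d0 := d0)
    ltac:(move=> m hm; have := hN m hm; rewrite (runs_lmap hRS) /lab; case: pbP => // -> _;
          by rewrite /D size_prefix).
  exact: hAR.
Qed.

Theorem mainTheorem6 :
  (prop_countable T_FL c00 /\ prop_universal T_FL c00 /\ prop_ultrahomogeneous T_FL c00) /\
  (forall (M : Type) (T : seq M -> Prop) (A : (nat -> M) -> Prop),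
     is_game T A ->
     prop_countable T A -> prop_universal T A -> prop_ultrahomogeneous T A ->
     exists u : seq M -> seq nat, game_iso T A T_FL c00 u).
Proof.
split; first by split; [exact: countable_FL | split; [exact: univ_FL | exact: uh_FL]].
exact: char_FL.
Qed.
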